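(* Let $\overline{A}^f,\overline{A}^d\in\mathbb{R}^{nd\times nd}$ with $\overline{A}^{f,\top}=\overline{A}^f\succ0$ and $\overline{A}^{d,\top}=\overline{A}^d$, and $b\in\mathbb{R}^{nd}$. Assume $(\overline{A}^f+\overline{A}^d)u+b=0$ has a unique solution $u_*$. Consider the iteration $$u_{\ell+1}=u_\ell-\delta\eta\,(\overline{A}^f u_\ell+\overline{A}^d u_{\ell-1}+b),\qquad \ell\ge1,$$ with $u_0=u_1=0$. If $\lambda_{\min}(\overline{A}^f)>\max\{\lambda_{\max}(\overline{A}^d),|\lambda_{\min}(\overline{A}^d)|\}$, then there is a sufficiently small $\delta\eta>0$ such that $u_\ell\to u_*$ as $\ell\to\infty$.
   Context: $\lambda_{\min}$ and $\lambda_{\max}$ denote the smallest and largest eigenvalues of a symmetric matrix. *)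

(* Defs.v *)
From HB Require Import structures.
From mathcomp Require Import all_boot all_order all_algebra.
From mathcomp Require Import all_classical all_reals all_analysis.
Set Implicit Arguments. Unset Strict Implicit. Unset Printing Implicit Defensive.
Import Order.TTheory GRing.Theory Num.Theory.
Import numFieldNormedType.Exports.
Local Open Scope classical_set_scope.
Local Open Scope ring_scope.

Definition symmx (R : realType) (N : nat) (A : 'M[R]_N) : Prop := A^T = A.

Definition posdef (R : realType) (N : nat) (A : 'M[R]_N) : Prop :=
  A^T = A /\ forall x : 'cV[R]_N, x != 0 -> 0 < (x^T *m A *m x) 0 0.

Definition lambda_min (R : realType) (N : nat) (A : 'M[R]_N) : R :=
  inf [set a : R | eigenvalue A a].
Definition lambda_max (R : realType) (N : nat) (A : 'M[R]_N) : R :=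
  sup [set a : R | eigenvalue A a].

(* two-step iteration: iter_pair k = (u_k, u_{k+1}), with u_0 = u_1 = 0 and
   u_{l+1} = u_l - h (Af u_l + Ad u_{l-1} + b) for l >= 1, h = delta*eta *)
Fixpoint iter_pair (R : realType) (N : nat) (Af Ad : 'M[R]_N) (b : 'cV[R]_N)
  (h : R) (k : nat) : 'cV[R]_N * 'cV[R]_N :=
  match k with
  | 0%N => (0, 0)
  | k'.+1 =>
      let p := iter_pair Af Ad b h k' in
      (p.2, p.2 - h *: (Af *m p.2 + Ad *m p.1 + b))
  end.

Definition iter_u (R : realType) (N : nat) (Af Ad : 'M[R]_N) (b : 'cV[R]_N)
  (h : R) (k : nat) : 'cV[R]_N := (iter_pair Af Ad b h k).1.

(* Main.v *)
Require Import Defs.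
From HB Require Import structures.
From mathcomp Require Import all_boot all_order all_algebra.
From mathcomp Require Import all_classical all_reals all_analysis.
From mathcomp Require Import ring lra.
Import Order.TTheory GRing.Theory Num.Theory.
Import numFieldNormedType.Exports.
Local Open Scope classical_set_scope.
Local Open Scope ring_scope.
Set Implicit Arguments. Unset Strict Implicit. Unset Printing Implicit Defensive.

Section Dot.
Variables (R : realType) (N : nat).
Definition dot (x y : 'cV[R]_N) : R := (x^T *m y) 0 0.

Lemma dotE x y : dot x y = \sum_i x i 0 * y i 0.
Proof. by rewrite /dot mxE; apply: eq_bigr => i _; rewrite mxE. Qed.

Lemma dotC x y : dot x y = dot y x.
Proof. by rewrite !dotE; apply: eq_bigr => i _; rewrite mulrC. Qed.

Lemma dotDl x y z : dot (x + y) z = dot x z + dot y z.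
Proof. by rewrite !dotE -big_split; apply: eq_bigr => i _; rewrite mxE mulrDl. Qed.
Lemma dotDr x y z : dot z (x + y) = dot z x + dot z y.
Proof. by rewrite dotC dotDl !(dotC z). Qed.
Lemma dotZl a x y : dot (a *: x) y = a * dot x y.
Proof. by rewrite !dotE mulr_sumr; apply: eq_bigr => i _; rewrite mxE mulrA. Qed.
Lemma dotZr a x y : dot y (a *: x) = a * dot y x.
Proof. by rewrite dotC dotZl dotC. Qed.
Lemma dotNl x y : dot (- x) y = - dot x y.
Proof. by rewrite -scaleN1r dotZl mulN1r. Qed.
Lemma dotNr x y : dot y (- x) = - dot y x.
Proof. by rewrite dotC dotNl dotC. Qed.
Lemma dotBl x y z : dot (x - y) z = dot x z - dot y z.
Proof. by rewrite dotDl dotNl. Qed.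
Lemma dotBr x y z : dot z (x - y) = dot z x - dot z y.
Proof. by rewrite dotDr dotNr. Qed.
Lemma dot0l x : dot 0 x = 0.
Proof. by rewrite dotE big1 // => i _; rewrite mxE mul0r. Qed.
Lemma dot0r x : dot x 0 = 0.
Proof. by rewrite dotC dot0l. Qed.
Lemma dot_ge0 x : 0 <= dot x x.
Proof. by rewrite dotE sumr_ge0 // => i _; rewrite -expr2 sqr_ge0. Qed.
Lemma dot_eq0 x : dot x x = 0 -> x = 0.
Proof.
rewrite dotE => /eqP; rewrite psumr_eq0 => [|i _]; last by rewrite -expr2 sqr_ge0.
move=> /allP H; apply/matrixP => i j; have := H i (mem_index_enum _).
by rewrite (ord1 j) mxE /= mulf_eq0 orbb => /eqP.
Qed.
Lemma dotM (M : 'M[R]_N) x y : dot x (M *m y) = dot (M^T *m x) y.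
Proof. by rewrite /dot trmx_mul trmxK mulmxA. Qed.
End Dot.

Lemma scal_step (R : realType) (h mu K E D P X a2 b2 c : R) :
  0 < h -> 0 < mu -> 0 <= K -> 0 <= E -> 0 <= D -> mu * E <= P ->
  a2 <= K * E -> b2 <= K * D -> 0 <= mu ^+ 2 * E - 2 * mu * X + b2 ->
  0 <= a2 + 2 * c + b2 -> 8 * h * K <= mu -> 4 * h * mu <= 1 ->
  E - 2 * h * P + 2 * h * X + h ^+ 2 * (a2 - 2 * c + b2) + h ^+ 2 * (a2 - 2 * c + b2)
   <= (1 - h * mu / 2) * (E + D).
Proof.
move=> h0 mu0 K0 E0 D0 hP ha hb hX hc hK hmu.
have i1 : 2 * h * X <= h * mu * E + h * b2 / mu.
  have : mu * (2 * X) <= mu * (mu * E + b2 / mu).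
    by rewrite mulrDr mulrA (mulrC mu (b2 / mu)) mulfVK ?gt_eqF //; nra.
  rewrite ler_pM2l // => hh.
  have -> : h * mu * E + h * b2 / mu = h * (mu * E + b2 / mu) by field; rewrite gt_eqF.
  by rewrite (mulrC 2 h) -mulrA ler_pM2l.
have i2 : a2 - 2 * c + b2 <= 2 * K * (E + D) by nra.
have i3 : h * b2 / mu <= h * (K * D) / mu.
  by rewrite ler_pM2r ?invr_gt0 // ler_pM2l.
have i4 : h * (K * D) / mu <= D / 8.
  rewrite ler_pdivrMr //.
  have hh : 0 <= (mu - 8 * h * K) * D by rewrite mulr_ge0 // subr_ge0.
  nra.
have i5 : h ^+ 2 * (a2 - 2 * c + b2) <= h ^+ 2 * (2 * K * (E + D)).
  by rewrite ler_pM2l // exprn_gt0.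
have i6 : h * (mu * E) <= h * P by rewrite ler_pM2l.
have i7 : 2 * (h ^+ 2 * (2 * K * (E + D))) <= h * mu / 2 * (E + D).
  have : 0 <= (h * (mu - 8 * h * K)) * (E + D).
    by rewrite mulr_ge0 ?addr_ge0 // mulr_ge0 ?subr_ge0 // ltW.
  nra.
have i8 : h * mu * D <= D / 4 by nra.
nra.
Qed.

Section Ray.
Variables (R : realType).

Lemma contM {T : topologicalType} (f g : T -> R) :
  continuous f -> continuous g -> continuous (fun x => f x * g x).
Proof. by move=> cf cg x; apply: cvgM; [exact: cf|exact: cg]. Qed.

Lemma quad_cont n (M : 'M[R]_n) : continuous (fun v : 'rV[R]_n => dot v^T (M *m v^T)).
Proof.
have -> : (fun v : 'rV[R]_n => dot v^T (M *m v^T)) =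
   (fun v => \sum_i \sum_j (v 0 i * (M i j * v 0 j))).
  apply: funext => v; rewrite dotE; apply: eq_bigr => i _.
  by rewrite !mxE mulr_sumr; apply: eq_bigr => j _; rewrite !mxE.
apply: continuous_big; first exact: add_continuous.
move=> i _; apply: continuous_big; first exact: add_continuous.
move=> j _; apply: contM; first exact: coord_continuous.
apply: contM; first exact: cst_continuous.
exact: coord_continuous.
Qed.

Lemma quadratic_zero (a c : R) : (forall t, 0 <= 2 * t * a + t ^+ 2 * c) -> a = 0.
Proof.
move=> H; pose k := `|c| + 1.
have k1 : 1 <= k by rewrite /k lerDr.
have ck : c <= k - 1 by rewrite /k addrK ler_norm.
have := H (- a / k).
have kn0 : k != 0 by rewrite gt_eqF // (lt_le_trans ltr01).
have -> : 2 * (- a / k) * a + (- a / k) ^+ 2 * c = (a ^+ 2 * (c - 2 * k)) / k ^+ 2.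
  by field.
rewrite pmulr_lge0 ?invr_gt0 ?exprn_gt0 ?(lt_le_trans ltr01) // => h.
apply/eqP; rewrite -sqrf_eq0 eq_le sqr_ge0 andbT.
nra.
Qed.


Lemma sphere_compact n :
  compact [set v : 'rV[R]_n | dot v^T v^T = 1].
Proof.
apply: bounded_closed_compact.
  exists 1; split => // M M1 v /= Av.
  apply: le_trans (ltW M1).
  rewrite [leLHS]/Num.norm /= mx_normrE; apply: bigmax_le => // [[i j]] _ /=.
  rewrite (ord1 i).
  have : v 0 j ^+ 2 <= 1.
    rewrite -Av dotE (bigD1 j) //= !mxE -expr2 lerDl sumr_ge0 // => k _.
    by rewrite !mxE -expr2 sqr_ge0.
  by rewrite -real_normK ?num_real // expr_le1.
have -> : [set v : 'rV[R]_n | dot v^T v^T = 1] =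
   (fun v : 'rV[R]_n => dot v^T (1%:M *m v^T)) @^-1` [set x | x = 1].
  by apply/seteqP; split => v /=; rewrite mul1mx.
apply: preimage_closed; last exact: closed_eq.
by move=> v _; apply: quad_cont.
Qed.

Lemma rayleigh n (S : 'M[R]_n.+1) : S^T = S ->
  exists m, (forall x, m * dot x x <= dot x (S *m x)) /\ eigenvalue S m.
Proof.
move=> sS.
pose A := [set v : 'rV[R]_n.+1 | dot v^T v^T = 1].
have A0 : A !=set0.
  exists (delta_mx 0 0); rewrite /A /= dotE (bigD1 0) //= !mxE eqxx mulr1.
  by rewrite big1 ?addr0 // => i /negbTE Hi; rewrite !mxE Hi andbF mul0r.
have [c cA cmin] := compact_EVT_min A0 (@sphere_compact n.+1)
   (continuous_subspaceT (@quad_cont n.+1 S)).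
set m := dot c^T (S *m c^T).
have Hc : dot c^T c^T = 1 by move: cA; rewrite inE.
have key : forall x, m * dot x x <= dot x (S *m x).
  move=> x; have [->|x0] := eqVneq x 0; first by rewrite mulmx0 !dot0l mulr0.
  have d0 : 0 < dot x x.
    rewrite lt_neqAle dot_ge0 andbT eq_sym; apply/negP => /eqP /dot_eq0 h.
    by rewrite h eqxx in x0.
  pose s := Num.sqrt (dot x x).
  have s0 : 0 < s by rewrite sqrtr_gt0.
  have hs : s ^+ 2 = dot x x by rewrite sqr_sqrtr // dot_ge0.
  have := cmin ((s^-1 *: x)^T).
  rewrite !inE /A /= trmxK -scalemxAr dotZl !dotZr => h.
  rewrite dotZl in h.
  have sn0 : s != 0 by rewrite gt_eqF.
  have h1 : m <= s^-1 * (s^-1 * dot x (S *m x)).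
    by apply: h; rewrite -hs; field.
  have -> : dot x (S *m x) = (s^-1 * (s^-1 * dot x (S *m x))) * s^+2 by field.
  by rewrite -hs ler_wpM2r // exprn_ge0 // ltW.
pose v := c^T; pose B := S - m%:M.
have sB : B^T = B by rewrite /B linearB /= tr_scalar_mx sS.
have QB : forall w, dot w (B *m w) = dot w (S *m w) - m * dot w w.
  by move=> w; rewrite /B mulmxBl mul_scalar_mx dotBr dotZr.
have Bv : dot v (B *m v) = 0 by rewrite QB Hc mulr1 subrr.
have : dot (B *m v) (B *m v) = 0.
  apply: quadratic_zero (dot (B *m v) (B *m (B *m v))) _ => t.
  have := key (v + t *: (B *m v)); rewrite -subr_ge0 -QB.
  rewrite mulmxDr -scalemxAr !dotDl !dotDr !dotZl !dotZr Bv.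
  rewrite (dotM B v) sB.
  move=> hh; apply: le_trans hh _; rewrite le_eqVlt; apply/orP; left; apply/eqP.
  ring.
move/dot_eq0 => Bv0.
exists m; split => //.
apply/eigenvalueP; exists c.
  have : S *m v = m *: v.
    by move: Bv0; rewrite /B mulmxBl mul_scalar_mx => /eqP; rewrite subr_eq0 => /eqP.
  move=> E; have -> : c *m S = (S *m v)^T by rewrite trmx_mul /v trmxK sS.
  by rewrite E linearZ /= trmxK.
by apply/negP => /eqP c0; move: Hc; rewrite c0 trmx0 dot0l => /eqP; rewrite eq_sym oner_eq0.
Qed.
End Ray.

Lemma vec_step (R : realType) N (A Ad : 'M[R]_N) (h mu K : R) (e dd : 'cV[R]_N) :
  0 < h -> 0 < mu -> 0 <= K ->
  (forall x, mu * dot x x <= dot x (A *m x)) ->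
  (forall x, dot (A *m x) (A *m x) <= K * dot x x) ->
  (forall x, dot (Ad *m x) (Ad *m x) <= K * dot x x) ->
  8 * h * K <= mu -> 4 * h * mu <= 1 ->
  dot (e - h *: (A *m e - Ad *m dd)) (e - h *: (A *m e - Ad *m dd))
  + dot (h *: (A *m e - Ad *m dd)) (h *: (A *m e - Ad *m dd))
  <= (1 - h * mu / 2) * (dot e e + dot dd dd).
Proof.
move=> h0 mu0 K0 HA HKA HKd hK hmu.
have hX : 0 <= mu ^+ 2 * dot e e - 2 * mu * dot e (Ad *m dd) + dot (Ad *m dd) (Ad *m dd).
  have := dot_ge0 (mu *: e - Ad *m dd).
  rewrite !dotBl !dotBr !dotZl !dotZr (dotC (Ad *m dd) e).
  move=> H; apply: le_trans H _; rewrite le_eqVlt; apply/orP; left; apply/eqP; ring.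
have hc : 0 <= dot (A *m e) (A *m e) + 2 * dot (A *m e) (Ad *m dd) + dot (Ad *m dd) (Ad *m dd).
  have := dot_ge0 (A *m e + Ad *m dd).
  rewrite !dotDl !dotDr (dotC (Ad *m dd) (A *m e)).
  move=> H; apply: le_trans H _; rewrite le_eqVlt; apply/orP; left; apply/eqP; ring.
have := @scal_step R h mu K _ _ _ _ _ _ (dot (A *m e) (Ad *m dd)) h0 mu0 K0 (dot_ge0 e) (dot_ge0 dd) (HA e) (HKA e) (HKd dd) hX hc hK hmu.
move=> H; apply: le_trans H; rewrite le_eqVlt; apply/orP; left; apply/eqP.
rewrite !dotBl !dotBr !dotZl !dotZr !dotBl !dotBr.
rewrite (dotC (Ad *m dd) (A *m e)) (dotC (A *m e) e) (dotC (Ad *m dd) e).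
ring.
Qed.

Lemma zmod_id (V : zmodType) (a c d u : V) : a + c - u = a + d - u - (d - c).
Proof. by rewrite opprB addrA [a + d - u]addrAC [a - u + d + c]addrAC addrK addrAC. Qed.

Lemma norm_le_dot (R : realType) N (z : 'cV[R]_N) : `|z| <= Num.sqrt (dot z z).
Proof.
rewrite [leLHS]/Num.norm /= mx_normrE; apply: bigmax_le => [|[i j] _ /=].
  exact: sqrtr_ge0.
rewrite (ord1 j) -sqrtr_sqr ler_sqrt ?dot_ge0 // dotE (bigD1 i) //= -expr2 lerDl.
by rewrite sumr_ge0 // => k _; rewrite -expr2 sqr_ge0.
Qed.

Lemma conv_main (R : realType) N (Af Ad : 'M[R]_N) (b ustar : 'cV[R]_N) (mu K h : R) :
  0 < mu -> 0 <= K ->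
  (forall x, mu * dot x x <= dot x ((Af + Ad) *m x)) ->
  (forall x, dot ((Af + Ad) *m x) ((Af + Ad) *m x) <= K * dot x x) ->
  (forall x, dot (Ad *m x) (Ad *m x) <= K * dot x x) ->
  (Af + Ad) *m ustar + b = 0 ->
  0 < h -> 8 * h * K <= mu -> 4 * h * mu <= 1 ->
  iter_u Af Ad b h @ \oo --> ustar.
Proof.
move=> mu0 K0 HA HKA HKd Hu h0 hK hmu.
pose p k := iter_pair Af Ad b h k.
pose W k := dot ((p k).2 - ustar) ((p k).2 - ustar)
   + dot ((p k).2 - (p k).1) ((p k).2 - (p k).1).
pose q := 1 - h * mu / 2.
have q0 : 0 <= q by rewrite /q; nra.
have q1 : q < 1 by rewrite /q; nra.
have hb : b = - ((Af + Ad) *m ustar).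
  by apply/eqP; rewrite -addr_eq0 addrC Hu.
have step : forall k, W k.+1 <= q * W k.
  move=> k; rewrite /W /p /=.
  set y := (iter_pair Af Ad b h k).2; set x := (iter_pair Af Ad b h k).1.
  have E : Af *m y + Ad *m x + b = (Af + Ad) *m (y - ustar) - Ad *m (y - x).
    rewrite hb [(Af + Ad) *m (y - ustar)]mulmxBr [(Af + Ad) *m y]mulmxDl mulmxBr.
    exact: zmod_id.
  rewrite E.
  have := vec_step (y - ustar) (y - x) h0 mu0 K0 HA HKA HKd hK hmu.
  rewrite -/q.
  rewrite [y - _ - ustar]addrAC [y - _ - y]addrAC subrr add0r dotNl dotNr opprK.
  done.
have Wk : forall k, W k <= q ^+ k * W 0.
  elim => [|k IH]; first by rewrite expr0 mul1r.
  apply: le_trans (step k) _.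
  by rewrite exprS -mulrA ler_wpM2l.
have W0e : W 0%N = dot ustar ustar.
  by rewrite /W /p /= sub0r subrr dotNl dotNr opprK dot0l addr0.
apply: cvg_zero. apply/(@norm_cvg0P _ _ _ _ _ (iter_u Af Ad b h - cst ustar)).
apply: (@squeeze_cvgr _ _ _ R (cst 0) (fun k => Num.sqrt (2 * dot ustar ustar * q ^+ k))).
- apply: nearW => k; rewrite normr_ge0 /=.
  apply: le_trans (norm_le_dot _) _.
  rewrite ler_sqrt; last by rewrite mulr_ge0 ?exprn_ge0 // mulr_ge0 // dot_ge0.
  rewrite -W0e.
  have : dot (iter_u Af Ad b h k - ustar) (iter_u Af Ad b h k - ustar) <= 2 * W k.
    have -> : iter_u Af Ad b h k - ustar = ((p k).2 - ustar) - ((p k).2 - (p k).1).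
      by have := zmod_id 0 (p k).1 (p k).2 ustar; rewrite !add0r.
    rewrite /W.
    set e := (p k).2 - ustar; set dd := (p k).2 - (p k).1.
    have := dot_ge0 (e + dd).
    clearbody e dd; rewrite !dotDl !dotDr ?dotNl ?dotNr (dotC dd e); lra.
  move=> H; apply: le_trans H _.
  by rewrite -mulrA (mulrC (W 0%N)) ler_pM2l // Wk.
- exact: cvg_cst.
- rewrite -sqrtr0; apply: (continuous_cvg _ (@sqrt_continuous R 0)).
  rewrite -(mulr0 (2 * dot ustar ustar)); apply: cvgM; first exact: cvg_cst.
  by apply: cvg_expr; rewrite ger0_norm.
Qed.

Lemma lmin (R : realType) n (S : 'M[R]_n.+1) : S^T = S ->
  exists m, lambda_min S = m /\ forall x, m * dot x x <= dot x (S *m x).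
Proof.
move=> sS; have [m [Hm Em]] := rayleigh sS.
exists m; split => //.
have lb : lbound [set a | eigenvalue S a] m.
  move=> a /= /eigenvalueP [u Hu u0].
  have := Hm u^T.
  have -> : S *m u^T = a *: u^T by rewrite -{1}sS -trmx_mul Hu linearZ.
  rewrite dotZr => H.
  have d0 : 0 < dot u^T u^T.
    rewrite lt_neqAle dot_ge0 andbT eq_sym; apply/negP => /eqP /dot_eq0 h.
    by move: u0; rewrite -[u]trmxK h trmx0 eqxx.
  by rewrite -(ler_pM2r d0).
rewrite /lambda_min; apply/eqP; rewrite eq_le; apply/andP; split.
  by apply: (ge_inf (ex_intro _ m lb)).
by apply: lb_le_inf => //; exists m.
Qed.

Lemma mbound (R : realType) n (M : 'M[R]_n.+1) :
  exists K, 0 <= K /\ forall x, dot (M *m x) (M *m x) <= K * dot x x.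
Proof.
have sS : (- (M^T *m M))^T = - (M^T *m M) by rewrite linearN /= trmx_mul trmxK.
have [m [Hm _]] := rayleigh sS.
exists `|m|; split => // x.
have := Hm x; rewrite mulNmx dotNr -mulmxA (dotM M^T) trmxK.
move=> H; apply: le_trans (_ : - m * dot x x <= _).
  by rewrite mulNr lerNr.
by rewrite ler_wpM2r ?dot_ge0 // -normrN ler_norm.
Qed.

Unset Implicit Arguments.
Set Strict Implicit.
Set Printing Implicit Defensive.

Theorem theorem5 (R : realType) (n d : nat)
  (Af Ad : 'M[R]_(n * d)) (b : 'cV[R]_(n * d)) (ustar : 'cV[R]_(n * d)) :
  posdef Af ->
  symmx Ad ->
  (Af + Ad) *m ustar + b = 0 ->
  (forall v : 'cV[R]_(n * d), (Af + Ad) *m v + b = 0 -> v = ustar) ->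
  lambda_min Af > Num.max (lambda_max Ad) `|lambda_min Ad| ->
  exists h0 : R, 0 < h0 /\
    forall h : R, 0 < h -> h <= h0 ->
      iter_u Af Ad b h @ \oo --> ustar.
Proof.
move: Af Ad b ustar; move: (n * d)%N => N.
case: N => [|N] Af Ad b ustar [sAf _] sAd Hu _ Hl.
  exists 1; split => // h _ _.
  have -> : iter_u Af Ad b h = cst ustar.
    by apply: funext => k; rewrite /cst; apply/matrixP => -[].
  exact: cvg_cst.
have [mf [Lf Hf]] := lmin sAf.
have [md [Ld Hd]] := lmin sAd.
move: Hl; rewrite Lf Ld gt_max => /andP [_ Hl].
have mdn : - md <= `|md| by rewrite -normrN ler_norm.
pose mu := mf + md.
have mu0 : 0 < mu by rewrite /mu; lra.
have HA : forall x, mu * dot x x <= dot x ((Af + Ad) *m x).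
  move=> x; rewrite mulmxDl dotDr /mu mulrDl.
  by apply: lerD.
have [K1 [K10 HK1]] := mbound (Af + Ad).
have [K2 [K20 HK2]] := mbound Ad.
pose K := K1 + K2.
have K0 : 0 <= K by rewrite addr_ge0.
pose D := 8 * K + 4 * mu ^+ 2 + 1.
have D0 : 0 < D by rewrite /D; nra.
exists (mu / D); split; first by rewrite divr_gt0.
move=> h h0 hle.
have hD : h * D <= mu by rewrite -ler_pdivlMr.
apply: (conv_main (mu := mu) (K := K)) => //.
- move=> x; apply: le_trans (HK1 x) _; rewrite ler_wpM2r ?dot_ge0 //.
  by rewrite /K lerDl.
- move=> x; apply: le_trans (HK2 x) _; rewrite ler_wpM2r ?dot_ge0 //.
  by rewrite /K lerDr.
- rewrite /D in hD; nra.
- rewrite /D in hD.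
  have : 4 * h * mu * mu <= 1 * mu by nra.
  by rewrite ler_pM2r.
Qed.
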